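(* Consider the multi-hop multi-channel network and Algorithm 1 described in the context, with parameter $\Delta_{est}\ge\Delta$, and assume $\delta\le\frac17$. Let $0<\epsilon<1$. Let $T_s$ be the time by which all nodes have started, and let $T_f$ be the earliest time by which each node has executed at least $\frac{48\max(2S,3\Delta_{est})}{\rho}\ln\!\left(\frac{N^2}{\epsilon}\right)$ full frames since $T_s$. Then with probability at least $1-\epsilon$, by time $T_f$ every node has discovered all its neighbors on all channels (i.e., for every link $v\to u$, $u$ has received a message from $v$).
   Context: Network: a finite set of $N$ nodes; each node $u$ has a nonempty available channel set $A_u$; $S=\max_u|A_u|$. Neighborhood on a channel is symmetric; all channels have identical propagation characteristics, so $u,v$ are neighbors on $c$ iff they are neighbors on some channel and $c\in A_u\cap A_v$. $\deg(u,c)$ is the number of neighbors of $u$ on $c$; $\Delta=\max_u\max_{c\in A_u}\deg(u,c)$. Each ordered pair of neighbors $(v,u)$ gives a link $v\to u$ with span $A_u\cap A_v$ and span-ratio $|A_u\cap A_v|/|A_u|$; $\rho$ is the minimum span-ratio over all links. A node operates on one channel at a time and cannot transmit and receive simultaneously; a node listening on $c$ throughout a real-time interval $I$ receives a message transmitted on $c$ during $I$ by a neighbor $v$ provided no other neighbor of it on $c$ transmits on $c$ at any time during $I$; no collision detection. Clocks: node $u$ has clock $C_u$ with $(1-\delta)\Delta t\le C_u(t+\Delta t)-C_u(t)\le(1+\delta)\Delta t$ for all real $t$, $\Delta t\ge0$; arbitrary offsets. Algorithm 1 (input: positive integer $\Delta_{est}$, an upper bound on $\Delta$ known to all nodes):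 each node starts at an arbitrary real time and partitions local time into consecutive frames of local length $L$, each split into three slots of local length $L/3$. At the start of each frame node $u$ picks $c$ uniformly at random from $A_u$; with probability $\min(\frac12,\frac{|A_u|}{3\Delta_{est}})$ it transmits on $c$ during each of the three slots a message with its identity and $A_u$, and otherwise listens on $c$ during the whole frame, recording each sender $v$ (with set $A$) as a neighbor with common channels $A\cap A_u$. Random choices are independent across frames and nodes. A full frame since $T_s$ is a frame starting at or after $T_s$. *)

(* Defs.v *)
From mathcomp Require Import all_boot all_order all_algebra.
From mathcomp Require Import boolp reals exp.
Set Implicit Arguments. Unset Strict Implicit. Unset Printing Implicit Defensive.
Import Order.TTheory GRing.Theory Num.Theory.
Local Open Scope ring_scope.

Section Network.
Variables (R : realType) (V C : finType).
(* A u : channels available at node u *)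
Variable A : V -> {set C}.
(* nb : the symmetric (propagation) neighborhood relation *)
Variable nb : rel V.

Definition nbc (u v : V) (c : C) : bool := [&& nb u v, c \in A u & c \in A v].

Definition link (v u : V) : bool := [exists c, nbc u v c].

Definition deg (u : V) (c : C) : nat := #|[set v | nbc u v c]|.

Definition Smax : nat := \max_(u : V) #|A u|.

Definition rho : R :=
  \big[Order.min/1]_(p : V * V | link p.1 p.2)
     ((#|A p.2 :&: A p.1|)%:R / (#|A p.2|)%:R).

(* transmission probability of node u in Algorithm 1 *)
Definition ptx (Dest : nat) (u : V) : R :=
  Order.min (1 / 2) ((#|A u|)%:R / (3 * Dest%:R)).

(* Timing: clocks Cl, start times s, frame length L (local time). *)
Variables (Cl : V -> R -> R) (s : V -> R) (L : R).

Definition inframe (u : V) (k : nat) (t : R) : Prop :=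
  s u <= t /\ Cl u (s u) + k%:R * L <= Cl u t < Cl u (s u) + k.+1%:R * L.

Definition inslot (u : V) (k j : nat) (t : R) : Prop :=
  s u <= t /\ Cl u (s u) + (3 * k + j)%:R * (L / 3) <= Cl u t
            < Cl u (s u) + (3 * k + j).+1%:R * (L / 3).

(* Random choices of the first K frames of every node: for (u,k),
   the chosen channel and whether u transmits (true) or listens (false). *)
Variable K : nat.
Definition outcome := {ffun V * 'I_K -> C * bool}.

Definition choice (w : outcome) (u : V) (k : nat) : option (C * bool) :=
  omap (fun i : 'I_K => w (u, i)) (insub k).

Definition weight (Dest : nat) (w : outcome) : R :=
  \prod_(x : V * 'I_K)
    ((if (w x).1 \in A x.1 then (#|A x.1|)%:R^-1 else 0) *
     (if (w x).2 then ptx Dest x.1 else 1 - ptx Dest x.1)).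

Definition Pr (Dest : nat) (E : outcome -> Prop) : R :=
  \sum_(w : outcome | `[< E w >]) weight Dest w.

Definition transmits (w : outcome) (u : V) (c : C) (t : R) : Prop :=
  exists k, inframe u k t /\ choice w u k = Some (c, true).

Definition listens (w : outcome) (u : V) (c : C) (t : R) : Prop :=
  exists k, inframe u k t /\ choice w u k = Some (c, false).

Definition received (w : outcome) (u v : V) (T : R) : Prop :=
  exists (k j : nat) (c : C),
    [/\ (j < 3)%N, choice w v k = Some (c, true), nbc u v c &
        (exists t, inslot v k j t)] /\
    [/\ (forall t, inslot v k j t -> t <= T),
        (forall t, inslot v k j t -> listens w u c t) &
        (forall x t, x != v -> nbc u x c -> inslot v k j t ->
                     ~ transmits w x c t)].

Definition all_discovered (w : outcome) (T : R) : Prop :=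
  forall u v, link v u -> received w u v T.

Definition full_frame_by (Ts : R) (u : V) (k : nat) (T : R) : Prop :=
  (exists t, inframe u k t) /\ (forall t, inframe u k t -> Ts <= t /\ t <= T).

Definition executed (Ts M : R) (u : V) (T : R) : Prop :=
  exists sq : seq nat, [/\ uniq sq, M <= (size sq)%:R &
                           forall k, k \in sq -> full_frame_by Ts u k T].

End Network.

(* Main.v *)
Require Import Defs.
From mathcomp Require Import all_boot all_order all_algebra.
From mathcomp Require Import boolp reals exp.
Import Order.TTheory GRing.Theory Num.Theory.
Local Open Scope ring_scope.
From mathcomp Require Import sequences.
From mathcomp Require Import lra ring zify.
Import Order.TTheory GRing.Theory Num.Theory.
Local Open Scope ring_scope.
Set Implicit Arguments. Unset Strict Implicit. Unset Printing Implicit Defensive.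


Section Prob.
Variables (R : realType) (V C : finType) (A : V -> {set C}) (K Dest : nat).
Hypothesis HA : forall u, A u != set0.

Local Notation I := (V * 'I_K)%type.
Local Notation J := (C * bool)%type.
Local Notation W := (@weight R V C A K Dest).

Definition mu (x : I) (j : J) : R :=
  (if j.1 \in A x.1 then (#|A x.1|)%:R^-1 else 0) *
  (if j.2 then ptx R A Dest x.1 else 1 - ptx R A Dest x.1).

Lemma weightE w : W w = \prod_x mu x (w x).
Proof. by []. Qed.

Lemma ptx_ge0 u : 0 <= ptx R A Dest u.
Proof.
rewrite /ptx le_min; apply/andP; split; first lra.
by apply: divr_ge0; [exact: ler0n| apply: mulr_ge0; [lra|exact: ler0n]].
Qed.

Lemma ptx_le u : ptx R A Dest u <= 1 / 2.
Proof. by rewrite /ptx ge_min lexx. Qed.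

Lemma mu_ge0 x j : 0 <= mu x j.
Proof.
rewrite /mu; apply: mulr_ge0.
  by case: ifP => // _; rewrite invr_ge0.
have := ptx_ge0 x.1; have := ptx_le x.1; case: (j.2) => // h1 h2.
rewrite subr_ge0; apply: (le_trans h1); lra.
Qed.

Lemma cardA_gt0 u : (0 < #|A u|)%N.
Proof. by rewrite card_gt0. Qed.

Lemma sum_mu x : \sum_j mu x j = 1.
Proof.
rewrite -(pair_bigA _ (fun c b => mu x (c, b))) /=.
under eq_bigr => c _ do rewrite big_bool /mu /= -mulrDr addrC subrK mulr1.
rewrite -big_mkcond /= sumr_const -mulr_natr.
by rewrite mul1r -(mulr_natr (#|A x.1|%:R^-1)) mulVf // pnatr_eq0 -lt0n cardA_gt0.
Qed.

Lemma weight_ge0 w : 0 <= W w.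
Proof. by rewrite weightE; apply: prodr_ge0 => x _; apply: mu_ge0. Qed.

Lemma sum_weight : \sum_w W w = 1.
Proof.
transitivity (\prod_x \sum_j mu x j); first by rewrite bigA_distr_bigA.
by rewrite big1 // => x _; rewrite sum_mu.
Qed.

Definition Ex (f : outcome V C K -> R) := \sum_w f w * W w.

Lemma PrE (E : outcome V C K -> Prop) :
  Pr R A Dest E = Ex (fun w => (`[< E w >] : bool)%:R).
Proof.
rewrite /Pr /Ex big_mkcond /=; apply: eq_bigr => w _.
by case: ifP; rewrite ?mul1r ?mul0r.
Qed.

Lemma Ex_le f g : (forall w, f w <= g w) -> Ex f <= Ex g.
Proof.
move=> h; apply: ler_sum => w _; apply: ler_wpM2r; [exact: weight_ge0|exact: h].
Qed.

Lemma Ex_cst c : Ex (fun _ => c) = c.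
Proof. by rewrite /Ex -mulr_sumr sum_weight mulr1. Qed.

Lemma Ex_sub f g : Ex (fun w => f w - g w) = Ex f - Ex g.
Proof. by rewrite /Ex -sumrB; apply: eq_bigr => w _; rewrite mulrBl. Qed.

Definition mix (D : {set I}) (w1 w2 : outcome V C K) : outcome V C K :=
  [ffun x => if x \in D then w1 x else w2 x].

Lemma Ex_indep (D : {set I}) (f g : outcome V C K -> R) :
  (forall w w' : outcome V C K, (forall x, x \in D -> w x = w' x) -> f w = f w') ->
  (forall w w' : outcome V C K, (forall x, x \notin D -> w x = w' x) -> g w = g w') ->
  Ex (fun w => f w * g w) = Ex f * Ex g.
Proof.
move=> hf hg.
rewrite /Ex mulr_suml.
under [RHS]eq_bigr => w1 _ do rewrite mulr_sumr.
rewrite pair_bigA /=.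
pose phi (p : outcome V C K * outcome V C K) := (mix D p.1 p.2, mix D p.2 p.1).
have phiK : cancel phi phi.
  case=> p1 p2; rewrite /phi /=; congr pair; apply/ffunP => x; rewrite !ffunE;
  by case: (x \in D).
rewrite (reindex_inj (can_inj phiK)) /=.
have -> : \sum_p f (phi p).1 * W (phi p).1 * (g (phi p).2 * W (phi p).2)
   = \sum_p (f p.1 * g p.1 * W p.1) * W p.2.
  apply: eq_bigr => -[p1 p2] _ /=.
  have e1 : f (mix D p1 p2) = f p1 by apply: hf => x xD; rewrite ffunE xD.
  have e2 : g (mix D p2 p1) = g p1 by apply: hg => x xD; rewrite ffunE (negPf xD).
  have e3 : W (mix D p1 p2) * W (mix D p2 p1) = W p1 * W p2.
    rewrite !weightE -!big_split /=; apply: eq_bigr => x _; rewrite !ffunE.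
    by case: (x \in D) => //; rewrite mulrC.
  rewrite e1 e2; transitivity (f p1 * g p1 * (W (mix D p1 p2) * W (mix D p2 p1))).
    by rewrite !mulrA; congr (_ * _); rewrite -!mulrA; congr (_ * _); rewrite mulrC.
  by rewrite e3 mulrA.
rewrite -(pair_bigA _ (fun p1 p2 => f p1 * g p1 * W p1 * W p2)) /=.
by apply: eq_bigr => w _; rewrite -mulr_sumr sum_weight mulr1.
Qed.

Lemma Pr_rect (P : I -> pred J) :
  Pr R A Dest (fun w => forall x, w x \in P x) = \prod_x \sum_(j in P x) mu x j.
Proof.
rewrite bigA_distr_big_dep /Pr; apply: eq_bigl => w.
by apply/asboolP/familyP.
Qed.

Lemma Ex_prod (ks : seq nat) (D : nat -> {set I})
  (f : nat -> outcome V C K -> R) :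
  uniq ks ->
  (forall k, k \in ks -> forall w w' : outcome V C K,
     (forall x, x \in D k -> w x = w' x) -> f k w = f k w') ->
  (forall k1 k2, k1 \in ks -> k2 \in ks -> k1 != k2 ->
     forall x, x \in D k1 -> x \in D k2 -> False) ->
  Ex (fun w => \prod_(k <- ks) f k w) = \prod_(k <- ks) Ex (f k).
Proof.
elim: ks => [|k0 ks IH] /= Hu Hdep Hdis.
  have -> : (fun w => \prod_(k <- [::]) f k w) = (fun _ => 1).
    by apply: funext => w; rewrite big_nil.
  by rewrite big_nil Ex_cst.
case/andP: Hu => k0n Hu.
have -> : (fun w => \prod_(k <- k0 :: ks) f k w) =
          (fun w => f k0 w * \prod_(k <- ks) f k w).
  by apply: funext => w; rewrite big_cons.
rewrite big_cons (Ex_indep (D := D k0)).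
- rewrite IH // => [k hk|k1 k2 h1 h2 h12]; first by apply: Hdep; rewrite inE hk orbT.
  by move=> x x1 x2; apply: (Hdis k1 k2 _ _ h12 x x1 x2); rewrite inE ?h1 ?h2 orbT.
- by apply: Hdep; rewrite inE eqxx.
- move=> w w' hw; apply: eq_big_seq => k hk; apply: Hdep; first by rewrite inE hk orbT.
  move=> x xD; apply: hw; apply/negP => xD0.
  apply: (Hdis k0 k _ _ _ x xD0 xD); rewrite ?inE ?eqxx ?hk ?orbT //.
  by apply/eqP => ek; rewrite ek hk in k0n.
Qed.

Lemma Ex_sum (T : finType) (P : pred T) (f : T -> outcome V C K -> R) :
  Ex (fun w => \sum_(i | P i) f i w) = \sum_(i | P i) Ex (f i).
Proof.
rewrite /Ex; under eq_bigr do rewrite mulr_suml.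
by rewrite exchange_big.
Qed.

Lemma Ex_ge0 f : (forall w, 0 <= f w) -> 0 <= Ex f.
Proof.
move=> h; apply: sumr_ge0 => w _; apply: mulr_ge0; [exact: h|exact: weight_ge0].
Qed.

End Prob.

Lemma prod_ge_1_sum (R : realType) (T : Type) (r : seq T) (P : pred T) (a : T -> R) :
  (forall i, P i -> 0 <= a i <= 1) ->
  1 - \sum_(i <- r | P i) a i <= \prod_(i <- r | P i) (1 - a i).
Proof.
move=> ha; elim: r => [|x r IH]; first by rewrite !big_nil subr0.
rewrite !big_cons; case: ifP => // Px.
have /andP[a0 a1] := ha x Px.
have S0 : 0 <= \sum_(i <- r | P i) a i by apply: sumr_ge0 => i /ha /andP[].
have h : (1 - a x) * (1 - \sum_(i <- r | P i) a i) <=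
         (1 - a x) * \prod_(i <- r | P i) (1 - a i).
  by apply: ler_wpM2l => //; lra.
have : 0 <= a x * \sum_(i <- r | P i) a i by apply: mulr_ge0.
move: h; set S := \sum_(i <- r | P i) a i; set Pp := \prod_(i <- r | P i) _.
move=> h h2.
have e : (1 - a x) * (1 - S) = 1 - (a x + S) + a x * S by ring.
lra.
Qed.


Section Clock.
Variables (R : realType) (V : finType) (Cl : V -> R -> R) (delta : R).
Hypothesis Hdelta : delta <= 1 / 7.
Hypothesis Hclock : forall u (t dt : R), 0 <= dt ->
      (1 - delta) * dt <= Cl u (t + dt) - Cl u t <= (1 + delta) * dt.

Lemma delta_ge0 (u : V) : 0 <= delta.
Proof.
have Hd := Hdelta.
have /andP[h1 h2] := @Hclock u 0 1 (@ler01 R).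
rewrite !mulr1 in h1 h2; lra.
Qed.

Lemma clk_inc y t t' : t <= t' ->
  (1 - delta) * (t' - t) <= Cl y t' - Cl y t <= (1 + delta) * (t' - t).
Proof.
have Hd := Hdelta.
move=> h; have := @Hclock y t (t' - t); rewrite subr_ge0 h => /(_ isT).
by rewrite addrCA subrr addr0.
Qed.

Lemma clk_lt y t t' : t < t' -> Cl y t < Cl y t'.
Proof.
have Hd := Hdelta.
move=> h; have /andP[h1 _] := @clk_inc y t t' (ltW h); have := delta_ge0 y => d0.
have : 0 < (1 - delta) * (t' - t) by apply: mulr_gt0; [move: Hdelta; lra | rewrite subr_gt0].
lra.
Qed.

Lemma clk_le y t t' : t <= t' -> Cl y t <= Cl y t'.
Proof. by rewrite le_eqVlt => /orP[/eqP->|/(clk_lt y)/ltW]. Qed.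

Lemma clk_le_inv y t t' : Cl y t <= Cl y t' -> t <= t'.
Proof.
have Hd := Hdelta.
move=> h; case: (lerP t t') => // /(clk_lt y) h2; lra.
Qed.

Lemma clk_lt_inv y t t' : Cl y t < Cl y t' -> t < t'.
Proof.
have Hd := Hdelta.
move=> h; case: (ltrP t t') => // /(clk_le y) h2; lra.
Qed.

Lemma clk_cmp y z t t' : t <= t' ->
  Cl z t' - Cl z t <= 4 / 3 * (Cl y t' - Cl y t) /\
  3 / 4 * (Cl y t' - Cl y t) <= Cl z t' - Cl z t.
Proof.
have Hd := Hdelta.
move=> h; have d0 := delta_ge0 y.
have /andP[a1 a2] := @clk_inc y t t' h; have /andP[b1 b2] := @clk_inc z t t' h.
have ht : 0 <= t' - t by lra.
have e1 : (1 + delta) * (t' - t) <= 4 / 3 * ((1 - delta) * (t' - t)).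
  rewrite mulrA -subr_ge0 -mulrBl; apply: mulr_ge0 => //; lra.
have e2 : 3 / 4 * ((1 + delta) * (t' - t)) <= (1 - delta) * (t' - t).
  rewrite mulrA -subr_ge0 -mulrBl; apply: mulr_ge0 => //; lra.
split; lra.
Qed.

Lemma disc_ivt y (t0 X eta : R) : 0 < eta ->
  exists t, X <= Cl y t < X + eta.
Proof.
have Hd := Hdelta.
move=> he; have d0 := delta_ge0 y.
set d := 2 * `|Cl y t0 - X| + 1.
set tb := t0 - d.
have hd : 0 <= d by rewrite /d; have := normr_ge0 (Cl y t0 - X); lra.
have hb : Cl y tb < X.
  have hle : tb <= t0 by rewrite /tb; lra.
  have /andP[h1 _] := @clk_inc y (tb) (t0) hle.
  have h3 : (1 - delta) * (t0 - tb) >= 6 / 7 * d.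
    have -> : t0 - tb = d by rewrite /tb; ring.
    apply: ler_wpM2r => //; lra.
  have hn : Cl y t0 - X < 6 / 7 * d.
    rewrite /d; have := ler_norm (Cl y t0 - X); have := normr_ge0 (Cl y t0 - X); lra.
  lra.
set h := eta / 2.
have hh : 0 < h by rewrite /h; lra.
pose P n := X <= Cl y (tb + n%:R * h).
have exP : exists n, P n.
  set q := (X - Cl y tb) / ((1 - delta) * h).
  have q0 : 0 <= q by rewrite /q; apply: divr_ge0; [lra|apply: mulr_ge0; lra].
  exists (Num.Def.archi_bound q); rewrite /P.
  have hn := archi_boundP q0.
  have hn0 : 0 <= (Num.Def.archi_bound q)%:R * h :> R.
    by apply: mulr_ge0; [exact: ler0n| lra].
  have hle : tb <= tb + (Num.Def.archi_bound q)%:R * h by lra.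
  have /andP[h1 _] := @clk_inc y (tb) (tb + (Num.Def.archi_bound q)%:R * h) hle.
  rewrite addrAC subrr add0r in h1.
  have hpos : 0 < (1 - delta) * h by apply: mulr_gt0; lra.
  have : X - Cl y tb <= (1 - delta) * ((Num.Def.archi_bound q)%:R * h).
    rewrite mulrCA; have : q * ((1 - delta) * h) = X - Cl y tb.
      by rewrite /q mulfVK //; lra.
    move=> <-; apply: ler_wpM2r; lra.
  lra.
case: (ex_minnP exP) => n Pn nmin.
case: n Pn nmin => [|m] Pn nmin.
  by rewrite /P mul0r addr0 in Pn; lra.
exists (tb + m.+1%:R * h); apply/andP; split => //.
have nPm : ~~ P m.
  by apply/negP => /nmin; rewrite ltnn.
rewrite /P -ltNge in nPm.
have e : tb + m.+1%:R * h = (tb + m%:R * h) + h by rewrite -natr1; ring.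
have hle : tb + m%:R * h <= tb + m.+1%:R * h by rewrite e; lra.
have /andP[_ h2] := @clk_inc y (tb + m%:R * h) (tb + m.+1%:R * h) hle.
rewrite e [_ + h - _]addrC addKr in h2; rewrite e.
have : (1 + delta) * h < eta.
  rewrite /h; have : (1 + delta) <= 8 / 7 by lra. move=> h8.
  have : (1 + delta) * (eta / 2) <= 8 / 7 * (eta / 2) by apply: ler_wpM2r; lra.
  lra.
lra.
Qed.

End Clock.


Section Geo.
Variables (R : realType) (V : finType) (Cl : V -> R -> R) (delta : R)
          (s : V -> R) (L : R).
Hypothesis Hdelta : delta <= 1 / 7.
Hypothesis Hclock : forall u (t dt : R), 0 <= dt ->
      (1 - delta) * dt <= Cl u (t + dt) - Cl u t <= (1 + delta) * dt.
Hypothesis HL : 0 < L.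

Local Notation ell y t := (Cl y t - Cl y (s y)).

Lemma frameE y a t : inframe Cl s L y a t <->
  [/\ s y <= t, a%:R * L <= ell y t & ell y t < a%:R * L + L].
Proof.
have Hd := Hdelta; have HL0 := HL.
have e : a.+1%:R * L = a%:R * L + L by rewrite -natr1 mulrDl mul1r.
rewrite /inframe e; split.
  by case=> h1 /andP[h2 h3]; split => //; lra.
by case=> h1 h2 h3; split => //; apply/andP; split; lra.
Qed.

Lemma slotE y k j t : inslot Cl s L y k j t <->
  [/\ s y <= t, k%:R * L + j%:R * (L / 3) <= ell y t &
      ell y t < k%:R * L + j%:R * (L / 3) + L / 3].
Proof.
have Hd := Hdelta; have HL0 := HL.
have e1 : (3 * k + j)%:R * (L / 3) = k%:R * L + j%:R * (L / 3).
  by rewrite natrD natrM; field.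
have e2 : (3 * k + j).+1%:R * (L / 3) = k%:R * L + j%:R * (L / 3) + L / 3.
  by rewrite -natr1 mulrDl e1 mul1r.
rewrite /inslot e1 e2; split.
  by case=> h1 /andP[h2 h3]; split => //; lra.
by case=> h1 h2 h3; split => //; apply/andP; split; lra.
Qed.

Lemma frame_exists y t : s y <= t -> exists a, inframe Cl s L y a t.
Proof.
have Hd := Hdelta; have HL0 := HL.
move=> h; have h0 : 0 <= ell y t.
  by rewrite subr_ge0; apply: (clk_le Hdelta Hclock).
have h1 : 0 <= ell y t / L by apply: divr_ge0 => //; lra.
have /andP[a1 a2] := truncn_itv h1.
exists (Num.Def.trunc (ell y t / L)); apply/frameE; split => //.
  by rewrite -ler_pdivlMr.
by move: a2; rewrite ltr_pdivrMr // -natr1 mulrDl mul1r.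
Qed.

Lemma slot_pt v k j : exists t, inslot Cl s L v k j t.
Proof.
have Hd := Hdelta; have HL0 := HL.
have hL3 : 0 < L / 3 by lra.
have [t /andP[h1 h2]] := disc_ivt Hdelta Hclock v 0
   (Cl v (s v) + (k%:R * L + j%:R * (L / 3))) hL3.
exists t; apply/slotE; split.
- apply: (clk_le_inv Hdelta Hclock (y := v)).
  have : 0 <= k%:R * L + j%:R * (L / 3) :> R.
    by apply: addr_ge0; apply: mulr_ge0 => //; lra.
  lra.
- lra.
- lra.
Qed.

Lemma slot_diam v k j z t1 t2 :
  inslot Cl s L v k j t1 -> inslot Cl s L v k j t2 ->
  Cl z t2 - Cl z t1 < 4 / 9 * L.
Proof.
have Hd := Hdelta; have HL0 := HL.
move=> /slotE[_ a1 a2] /slotE[_ b1 b2].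
case: (lerP t1 t2) => h.
  have [c1 _] := clk_cmp Hdelta Hclock v z h.
  lra.
have := clk_lt Hdelta Hclock z h; lra.
Qed.

Lemma frames_close v k j x b1 b2 t1 t2 :
  inslot Cl s L v k j t1 -> inframe Cl s L x b1 t1 ->
  inslot Cl s L v k j t2 -> inframe Cl s L x b2 t2 -> (b2 <= b1.+1)%N.
Proof.
have Hd := Hdelta; have HL0 := HL.
move=> s1 /frameE[_ f1 f2] s2 /frameE[_ g1 g2].
have := slot_diam x s1 s2 => d.
have : b2%:R * L < (b1%:R + 2) * L :> R by lra.
have -> : (b1%:R + 2 : R) = (b1 + 2)%:R by rewrite natrD.
by rewrite ltr_pM2r // ltr_nat addn2 ltnS.
Qed.

Lemma slots_disjoint v k1 j1 k2 j2 y b t1 t2 :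
  (k1 + 2 <= k2)%N -> (j1 < 2)%N ->
  inslot Cl s L v k1 j1 t1 -> inframe Cl s L y b t1 ->
  inslot Cl s L v k2 j2 t2 -> inframe Cl s L y b t2 -> False.
Proof.
have Hd := Hdelta; have HL0 := HL.
move=> hk hj /slotE[_ a1 a2] /frameE[_ f1 f2] /slotE[_ b1 b2] /frameE[_ g1 g2].
have hk' : (k1%:R + 2) * L <= k2%:R * L :> R.
  have -> : (k1%:R + 2 : R) = (k1 + 2)%:R by rewrite natrD.
  by rewrite ler_pM2r // ler_nat.
have hj' : j1%:R * (L / 3) <= L / 3 :> R.
  have : (j1%:R : R) <= 1 by rewrite (_ : 1 = 1%:R) // ler_nat -ltnS.
  move=> h; have := ler_wpM2r (x := L / 3) (ltW (divr_gt0 HL (ltr0n _ 3))) h.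
  by rewrite mul1r.
have hj2 : 0 <= j2%:R * (L / 3) :> R by apply: mulr_ge0 => //; lra.
have ht : t1 <= t2.
  apply: ltW; apply: (clk_lt_inv Hdelta Hclock (y := v)); lra.
have [_ c2] := clk_cmp Hdelta Hclock v y ht.
lra.
Qed.

Lemma slot_choice v u k :
  (forall j t, (j < 2)%N -> inslot Cl s L v k j t -> s u <= t) ->
  exists j a, [/\ (j < 2)%N, exists t, inslot Cl s L v k j t &
                forall t, inslot Cl s L v k j t -> inframe Cl s L u a t].
Proof.
have Hd := Hdelta; have HL0 := HL.
move=> hst.
have [r0 hr0] := slot_pt v k 0.
have [a ha] := frame_exists (hst 0%N r0 isT hr0).
case: (pselect (forall t, inslot Cl s L v k 0 t -> inframe Cl s L u a t)) => H.
  by exists 0%N, a; split => //; exists r0.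
move/existsNP: H => [t1 /not_implyP [h1 h2]].
have su1 := hst 0%N t1 isT h1.
have [r1 hr1] := slot_pt v k 1.
move: (ha) => /frameE [_ fa1 fa2].
move: (h1) => /slotE [_]; rewrite mul0r addr0 => s11 s12.
move: (hr0) => /slotE [_]; rewrite mul0r addr0 => s01 s02.
case: (ltrP (ell u t1) (a%:R * L)) => hlt.
- exists 1%N, a; split => //; first by exists r1.
  move=> t ht; have sut := hst 1%N t isT ht.
  move: (ht) => /slotE [_]; rewrite mul1r => t1' t2'.
  apply/frameE; split => //.
    have hr : r0 <= t.
      by apply: ltW; apply: (clk_lt_inv Hdelta Hclock (y := v)); lra.
    have := clk_le Hdelta Hclock u hr; lra.
  have hr : t1 <= t.
    by apply: ltW; apply: (clk_lt_inv Hdelta Hclock (y := v)); lra.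
  have [c1 _] := clk_cmp Hdelta Hclock v u hr.
  lra.
- have hge : a%:R * L + L <= ell u t1.
    case: (ltrP (ell u t1) (a%:R * L + L)) => // hh.
    by exfalso; apply: h2; apply/frameE.
  exists 1%N, a.+1; split => //; first by exists r1.
  move=> t ht; have sut := hst 1%N t isT ht.
  move: (ht) => /slotE [_]; rewrite mul1r => t1' t2'.
  apply/frameE; rewrite -natr1 mulrDl mul1r; split => //.
    have hr : t1 <= t.
      by apply: ltW; apply: (clk_lt_inv Hdelta Hclock (y := v)); lra.
    have := clk_le Hdelta Hclock u hr; lra.
  have hr : r0 <= t.
    by apply: ltW; apply: (clk_lt_inv Hdelta Hclock (y := v)); lra.
  have [c1 _] := clk_cmp Hdelta Hclock v u hr.
  lra.
Qed.

Lemma slot_in_frame y k j t : (j < 3)%N ->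
  inslot Cl s L y k j t -> inframe Cl s L y k t.
Proof.
have Hd := Hdelta; have HL0 := HL.
move=> hj /slotE[h1 h2 h3]; apply/frameE; split => //.
  have : 0 <= j%:R * (L / 3) :> R by apply: mulr_ge0 => //; lra.
  lra.
have : j%:R * (L / 3) <= 2 * (L / 3) :> R.
  apply: ler_wpM2r; first lra.
  by rewrite ler_nat -ltnS.
lra.
Qed.

End Geo.


Section Net.
Variables (R : realType) (V C : finType) (A : V -> {set C}) (nb : rel V)
  (Dest : nat) (delta : R) (Cl : V -> R -> R) (s : V -> R) (L : R) (K : nat).
Hypothesis HA : forall u, A u != set0.
Hypothesis Hirr : forall u, ~~ nb u u.

Local Notation outc := (outcome V C K).
Local Notation I := (V * 'I_K)%type.

Definition Dset v k j : {set I} :=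
  [set xb : I | `[< exists t, inslot Cl s L v k j t /\ inframe Cl s L xb.1 (val xb.2) t >]].

Definition interf u v (D : {set I}) c (xb : I) : bool :=
  [&& xb \in D, xb.1 != v & nbc A nb u xb.1 c].

Definition Sev u v (ok oa : 'I_K) (D : {set I}) (w : outc) : Prop :=
  [/\ (w (v, ok)).2, nbc A nb u v (w (v, ok)).1, w (u, oa) = ((w (v, ok)).1, false) &
      forall xb, interf u v D (w (v, ok)).1 xb -> w xb != ((w (v, ok)).1, true)].

Lemma choiceE (w : outc) (y : V) (o : 'I_K) : Defs.choice w y o = Some (w (y, o)).
Proof. by rewrite /Defs.choice valK. Qed.

Lemma choiceP (w : outc) (y : V) k p : Defs.choice w y k = Some p ->
  exists o : 'I_K, val o = k /\ w (y, o) = p.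
Proof. by rewrite /Defs.choice; case: insubP => [o _ <-|] //= [<-]; exists o. Qed.

Lemma Sev_received u v k j (ok oa : 'I_K) Tf (w : outc) :
  val ok = k -> (j < 3)%N -> (exists t, inslot Cl s L v k j t) ->
  (forall t, inslot Cl s L v k j t -> t <= Tf) ->
  (forall t, inslot Cl s L v k j t -> inframe Cl s L u oa t) ->
  Sev u v ok oa (Dset v k j) w -> received A nb Cl s L w u v Tf.
Proof.
move=> ek hj hne hTf hfr [h1 h2 h3 h4].
set c := (w (v, ok)).1 in h2 h3 h4.
exists k, j, c; split; split => //.
- by rewrite -ek choiceE; move: h1; rewrite /c; case: (w (v, ok)) => ? [].
- move=> t ht; exists oa; split; first exact: hfr.
  by rewrite choiceE h3.
- move=> x t xv hx ht [b [hb hch]].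
  have [o [eo wo]] := choiceP hch.
  have : interf u v (Dset v k j) c (x, o).
    apply/and3P; split => //; rewrite inE; apply/asboolP; exists t; split => //.
    by rewrite /= eo.
  by move/h4; rewrite wo eqxx.
Qed.

Lemma Sev_dep u v (ok oa : 'I_K) (D : {set I}) (w w' : outc) :
  (v, ok) \in D -> (u, oa) \in D -> (forall x, x \in D -> w x = w' x) ->
  Sev u v ok oa D w -> Sev u v ok oa D w'.
Proof.
move=> h1 h2 hw [a1 a2 a3 a4].
rewrite /Sev -!hw //; split => // xb hi; rewrite -hw; first exact: a4.
by case/and3P: hi.
Qed.

Hypothesis HDelta : forall u c, c \in A u -> (deg A nb u c <= Dest)%N.

Lemma card_interf u v (D : {set I}) c :
  c \in A u -> nbc A nb u v c ->
  (forall x, #|[set b : 'I_K | (x, b) \in D]| <= 2)%N ->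
  (#|[pred xb | interf u v D c xb]| <= 2 * (Dest - 1))%N.
Proof.
move=> hc huv hD.
rewrite -sum1_card.
have -> : (\sum_(xb in [pred xb | interf u v D c xb]) 1 =
          \sum_(x | true) \sum_(b | interf u v D c (x, b)) 1)%N.
  rewrite pair_big_dep.
  by apply: eq_bigl => -[x b].
apply: (@leq_trans (\sum_(x | (x != v) && nbc A nb u x c) 2)%N).
  rewrite [X in (_ <= X)%N]big_mkcond /=; apply: leq_sum => x _.
  case: ifP => hx.
    rewrite (eq_bigl (fun b => (x, b) \in D)); last first.
      by move=> b; rewrite /interf /= hx andbT.
    by rewrite sum1_card; apply: leq_trans (hD x); apply: eq_leq; apply: eq_card => b; rewrite inE.
  rewrite big_pred0 // => b; rewrite /interf /=.
  by case: (x != v) hx; case: (nbc A nb u x c); rewrite ?andbF.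
rewrite sum_nat_const.
have hdeg := HDelta hc.
rewrite /deg (cardsD1 v) inE huv in hdeg.
have -> : #|[pred x | (x != v) && nbc A nb u x c]| =
          #|[set x | nbc A nb u x c] :\ v|.
  by apply: eq_card => x; rewrite !inE.
move: hdeg; set n := #|_ :\ v|; move=> hdeg; lia.
Qed.

Hypothesis HDest : (0 < Dest)%N.

Definition mx : R := Num.max (2 * (Smax A)%:R) (3 * Dest%:R).

Lemma D_pos : 0 < Dest%:R :> R.
Proof. by rewrite ltr0n. Qed.

Lemma D_ge1 : 1 <= Dest%:R :> R.
Proof. by rewrite ler1n. Qed.

Lemma mx_ge3D : 3 * Dest%:R <= mx.
Proof. by rewrite /mx le_max lexx orbT. Qed.

Lemma mx_pos : 0 < mx.
Proof. have := mx_ge3D; have := D_pos; lra. Qed.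

Lemma cardA_le y : (#|A y|%:R : R) <= (Smax A)%:R.
Proof. by rewrite ler_nat; apply: (@leq_bigmax V (fun u => #|A u|) y). Qed.

Lemma cardA_pos y : 0 < (#|A y|%:R : R).
Proof. by rewrite ltr0n card_gt0. Qed.

Lemma ptx_lb y : #|A y|%:R / mx <= ptx R A Dest y.
Proof.
have hm := mx_pos; have hS := cardA_le y; have hD := D_pos.
have hA := cardA_pos y.
rewrite /ptx le_min; apply/andP; split.
  rewrite ler_pdivrMr //.
  have : 2 * (Smax A)%:R <= mx by rewrite /mx le_max lexx.
  lra.
rewrite ler_pdivrMr // mulrAC ler_pdivlMr; last by lra.
apply: ler_wpM2l; first lra.
exact: mx_ge3D.
Qed.

Lemma mu_vt y (o : 'I_K) c : c \in A y -> 1 / mx <= mu R A Dest (y, o) (c, true).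
Proof.
move=> hc; rewrite /mu /= hc.
have hA := cardA_pos y; have hm := mx_pos.
have := ptx_lb y => h.
have : #|A y|%:R^-1 * (#|A y|%:R / mx) <= #|A y|%:R^-1 * ptx R A Dest y.
  by apply: ler_wpM2l => //; rewrite invr_ge0; lra.
rewrite mulrA mulVf ?mul1r //; lra.
Qed.

Lemma mu_uf y (o : 'I_K) c : c \in A y ->
  (#|A y|%:R)^-1 / 2 <= mu R A Dest (y, o) (c, false).
Proof.
move=> hc; rewrite /mu /= hc.
have hA := cardA_pos y; have hp := ptx_le R A Dest y.
apply: ler_wpM2l; first by rewrite invr_ge0; lra.
lra.
Qed.

Lemma mu_t_ub (x : I) c : mu R A Dest x (c, true) <= 1 / (3 * Dest%:R).
Proof.
rewrite /mu /=; case: ifP => hc; last by rewrite mul0r; have := D_pos; 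
  move=> h; apply: divr_ge0; lra.
have hA := cardA_pos x.1; have hD := D_pos.
have h : ptx R A Dest x.1 <= #|A x.1|%:R / (3 * Dest%:R) by rewrite /ptx ge_min lexx orbT.
have : #|A x.1|%:R^-1 * ptx R A Dest x.1 <=
       #|A x.1|%:R^-1 * (#|A x.1|%:R / (3 * Dest%:R)).
  by apply: ler_wpM2l => //; rewrite invr_ge0; lra.
by rewrite mulrA mulVf ?mul1r //; lra.
Qed.

Lemma Sev_prob u v (ok oa : 'I_K) (D : {set I}) :
  link A nb v u ->
  (forall x, #|[set b : 'I_K | (x, b) \in D]| <= 2)%N ->
  rho R A nb / (6 * mx) <= Pr R A Dest (Sev u v ok oa D).
Proof.
move=> hl hD.
have huv : nb u v by case/existsP: hl => c /and3P[].
have uv : u != v by apply/eqP => e; move: huv; rewrite e (negPf (Hirr v)).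
have hvu : (v, ok) != (u, oa) by apply/eqP => -[e _]; rewrite e eqxx in uv.
pose P (c : C) (xb : I) : pred (C * bool) :=
  if interf u v D c xb then predC1 (c, true)
  else if xb == (v, ok) then pred1 (c, true)
  else if xb == (u, oa) then pred1 (c, false) else predT.
have nIv : forall c, ~~ interf u v D c (v, ok).
  by move=> c; rewrite /interf /= eqxx /= andbF.
have nIu : forall c, ~~ interf u v D c (u, oa).
  by move=> c; rewrite /interf /nbc /= (negPf (Hirr u)) /= !andbF.
have Pv : forall c, P c (v, ok) = pred1 (c, true).
  by move=> c; rewrite /P (negPf (nIv c)) eqxx.
have Pu : forall c, P c (u, oa) = pred1 (c, false).
  by move=> c; rewrite /P (negPf (nIu c)) eq_sym (negPf hvu) eqxx.
have RS : forall c (w : outc), (forall xb, w xb \in P c xb) ->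
    nbc A nb u v c -> Sev u v ok oa D w.
  move=> c w hw hc.
  have hv : w (v, ok) = (c, true) by have := hw (v, ok); rewrite Pv inE => /eqP.
  have hu : w (u, oa) = (c, false) by have := hw (u, oa); rewrite Pu inE => /eqP.
  rewrite /Sev hv /=; split => // xb hi.
  by have := hw xb; rewrite /P hi inE.
have pw : forall w : outc,
    \sum_(c | nbc A nb u v c) (`[< forall xb, w xb \in P c xb >] : bool)%:R
    <= (`[< Sev u v ok oa D w >] : bool)%:R :> R.
  move=> w; set c0 := (w (v, ok)).1.
  rewrite big_mkcond (bigD1 c0) //= big1 ?addr0.
  - case: ifP => hc; last exact: ler0n.
    case: asboolP => H /=; last exact: ler0n.
    by rewrite (asboolT (RS c0 w H hc)).
  - move=> c hc; case: ifP => // _; case: asboolP => //= H.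
    have := H (v, ok); rewrite Pv inE => /eqP hv.
    by rewrite /c0 hv eqxx in hc.
rewrite PrE.
apply: le_trans (Ex_le A Dest pw).
rewrite Ex_sum.
have lb : forall c, nbc A nb u v c ->
    (#|A u|%:R)^-1 / (6 * mx) <=
    Ex A Dest (fun w : outc => (`[< forall xb, w xb \in P c xb >] : bool)%:R).
  move=> c hc; rewrite -PrE Pr_rect.
  case/and3P: (hc) => _ cu cv.
  rewrite (bigID (interf u v D c)) /=.
  have I1 : 1 / 3 <= \prod_(x | interf u v D c x) \sum_(j in P c x) mu R A Dest x j.
    have -> : \prod_(x | interf u v D c x) \sum_(j in P c x) mu R A Dest x j =
              \prod_(x | interf u v D c x) (1 - mu R A Dest x (c, true)).
      apply: eq_bigr => x hx; rewrite /P hx.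
      have := sum_mu R Dest HA x; rewrite (bigD1 (c, true)) //= => e.
      have -> : \sum_(j in predC1 (c, true)) mu R A Dest x j =
                \sum_(j | j != (c, true)) mu R A Dest x j.
        by apply: eq_bigl => j; rewrite inE.
      lra.
    have H1 : forall x, interf u v D c x -> 0 <= mu R A Dest x (c, true) <= 1.
      move=> x _; rewrite mu_ge0 /=; apply: le_trans (mu_t_ub x c) _.
      have hD1 : 1 <= Dest%:R :> R by rewrite ler1n.
      rewrite ler_pdivrMr; lra.
    apply: (le_trans _ (prod_ge_1_sum (index_enum _) H1)).
    have hcard := card_interf cu hc hD.
    have S1 : \sum_(x <- index_enum _ | interf u v D c x) mu R A Dest x (c, true) <=
              \sum_(x <- index_enum _ | interf u v D c x) (1 / (3 * Dest%:R)).
      by apply: ler_sum => x _; apply: mu_t_ub.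
    move: S1; rewrite (eq_bigl (fun x => x \in [pred x | interf u v D c x])) //.
    rewrite sumr_const -mulr_natl.
    set n := #|_|; move=> S1.
    have hn : (n%:R : R) <= 2 * Dest%:R.
      rewrite -(natrM R 2) ler_nat; apply: leq_trans hcard _; lia.
    have hD0 := D_pos.
    have : n%:R * (1 / (3 * Dest%:R)) <= 2 / 3 :> R.
      rewrite mul1r ler_pdivrMr; last lra.
      lra.
    lra.
  have I2 : \prod_(x | ~~ interf u v D c x) \sum_(j in P c x) mu R A Dest x j =
            mu R A Dest (v, ok) (c, true) * mu R A Dest (u, oa) (c, false).
    rewrite (bigD1 (v, ok)) /=; last exact: nIv.
    rewrite (bigD1 (u, oa)) /=; last by rewrite nIu eq_sym hvu.
    rewrite [X in _ * (_ * X)]big1; last first.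
      move=> x /andP[/andP[hx1 hx2] hx3].
      rewrite /P (negPf hx1) (negPf hx2) (negPf hx3).
      by rewrite -(sum_mu R Dest HA x); apply: eq_bigl => j; rewrite inE.
    rewrite Pv Pu (big_pred1 (c, true)); last by move=> j; rewrite inE.
    rewrite (big_pred1 (c, false)); last by move=> j; rewrite inE.
    by rewrite mulr1.
  rewrite I2.
  have m1 := mu_vt ok cv; have m2 := mu_uf oa cu.
  have hA := cardA_pos u; have hm := mx_pos.
  have e : (#|A u|%:R)^-1 / (6 * mx) = 1 / 3 * (1 / mx * ((#|A u|%:R)^-1 / 2)).
    by field; apply/andP; split; apply/eqP; lra.
  have hinv : 0 <= (#|A u|%:R)^-1 / 2 :> R.
    by apply: divr_ge0; [rewrite invr_ge0; lra| lra].
  have h1m : 0 <= 1 / mx by apply: divr_ge0; lra.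
  rewrite e; apply: ler_pM; [lra | exact: mulr_ge0 | exact: I1 | ].
  by apply: ler_pM.
apply: le_trans (ler_sum _ lb).
rewrite (eq_bigl (fun c => c \in [pred c | nbc A nb u v c])) //.
rewrite sumr_const.
have -> : #|[pred c | nbc A nb u v c]| = #|A u :&: A v|.
  by apply: eq_card => c; rewrite !inE /nbc huv.
have hr : rho R A nb <= #|A u :&: A v|%:R / #|A u|%:R.
  by rewrite /rho; apply: (@bigmin_le_cond _ _ _ 1 (v, u)).
have hm := mx_pos.
rewrite -(mulr_natl ((#|A u|%:R)^-1 / (6 * mx))).
rewrite mulrA; apply: ler_wpM2r => //.
by rewrite invr_ge0; lra.
Qed.

Hypothesis Hdelta : delta <= 1 / 7.
Hypothesis Hclock : forall u (t dt : R), 0 <= dt ->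
      (1 - delta) * dt <= Cl u (t + dt) - Cl u t <= (1 + delta) * dt.
Hypothesis HL : 0 < L.

Lemma card_frames v k j x : (#|[set b : 'I_K | (x, b) \in Dset v k j]| <= 2)%N.
Proof.
set B := [set b : 'I_K | (x, b) \in Dset v k j].
have close : forall b1 b2, b1 \in B -> b2 \in B -> (val b2 <= (val b1).+1)%N.
  move=> b1 b2; rewrite !inE => /asboolP [t1 [s1 f1]] /asboolP [t2 [s2 f2]].
  exact: (frames_close Hdelta Hclock HL s1 f1 s2 f2).
case: (set_0Vmem B) => [->|[b0 hb0]]; first by rewrite cards0.
case: (arg_maxnP (fun i : 'I_K => val i) hb0) => bm hbm hmax.
pose b' : 'I_K := insubd bm (val bm).-1.
have : B \subset [set bm; b'].
  apply/subsetP => b hb; rewrite !inE.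
  have h1 : (val b <= val bm)%N := hmax b hb.
  have h2 := close b bm hb hbm.
  case: (ltngtP (val b) (val bm)) => e.
  - apply/orP; right; apply/eqP/val_inj; rewrite val_insubd.
    have -> : ((val bm).-1 < K)%N by apply: leq_ltn_trans (ltn_ord bm); apply: leq_pred.
    by have -> : val bm = (val b).+1 by lia.
  - lia.
  - by apply/orP; left; apply/eqP/val_inj.
move/subset_leq_card; rewrite cards2 => h; apply: leq_trans h _.
by case: (bm != b').
Qed.

Lemma Pr_le1 (E : outc -> Prop) : Pr R A Dest E <= 1.
Proof.
rewrite PrE; apply: (@le_trans _ _ (Ex A Dest (fun _ : outc => 1))).
  by apply: Ex_le => w; case: asboolP.
by rewrite (Ex_cst K Dest HA).
Qed.

Lemma prod_const_seq (T : Type) (r : seq T) (c : R) : \prod_(i <- r) c = c ^+ size r.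
Proof.
elim: r => [|x r IH]; first by rewrite big_nil expr0.
by rewrite big_cons IH exprS.
Qed.

Lemma parity_gap k1 k2 (b : bool) : odd k1 = b -> odd k2 = b -> (k1 < k2)%N ->
  (k1 + 2 <= k2)%N.
Proof.
move=> h1 h2 hk.
have : k2 != k1.+1 by apply/eqP => e; move: h2; rewrite e /= h1; case: b {h1}.
lia.
Qed.

Lemma link_bound u v (Ts Tf : R) (sq : seq nat) :
  link A nb v u -> uniq sq ->
  (forall k, k \in sq -> full_frame_by Cl s L Ts v k Tf) ->
  (forall y, s y <= Ts) ->
  (forall y k t, inframe Cl s L y k t -> t <= Tf -> (k < K)%N) ->
  exists n : nat, (size sq <= 2 * n)%N /\
    Pr R A Dest (fun w : outc => ~ received A nb Cl s L w u v Tf)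
      <= (1 - rho R A nb / (6 * mx)) ^+ n.
Proof.
move=> hl hu hff hs hK.
set q := rho R A nb / (6 * mx).
have [b hb] : exists b : bool, (size sq <= 2 * size [seq k <- sq | odd k == b])%N.
  have e1 : size [seq k <- sq | odd k == true] = count odd sq.
    by rewrite size_filter; apply: eq_count => k; rewrite eqb_id.
  have e0 : size [seq k <- sq | odd k == false] = count (predC odd) sq.
    by rewrite size_filter; apply: eq_count => k; rewrite eqbF_neg.
  have := count_predC odd sq.
  case: (leqP (count odd sq) (count (predC odd) sq)) => h e.
    by exists false; rewrite e0; lia.
  by exists true; rewrite e1; lia.
set ks := [seq k <- sq | odd k == b].
exists (size ks); split => //.
have uks : uniq ks := filter_uniq _ hu.
have ksq : forall k, k \in ks -> k \in sq by move=> k; rewrite mem_filter => /andP[].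
have kpar : forall k, k \in ks -> odd k = b.
  by move=> k; rewrite mem_filter => /andP[/eqP].
have fr : forall k, k \in ks ->
    (exists t, inframe Cl s L v k t) /\ (forall t, inframe Cl s L v k t -> Ts <= t /\ t <= Tf).
  by move=> k /ksq /hff.
have kK : forall k, k \in ks -> (k < K)%N.
  move=> k /fr [[t ht] h]; exact: (hK v k t ht (proj2 (h t ht))).
have [K0|Kpos] := posnP K.
  have -> : ks = [::].
    case E: ks => [|k ks'] //.
    by have := kK k; rewrite E inE eqxx K0 ltn0 => /(_ isT).
  by rewrite expr0; apply: Pr_le1.
pose i0 : 'I_K := Ordinal Kpos.
have hdat : forall k, exists p : nat * 'I_K, k \in ks ->
    [/\ (p.1 < 2)%N, exists t, inslot Cl s L v k p.1 t &
        forall t, inslot Cl s L v k p.1 t -> inframe Cl s L u (val p.2) t].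
  move=> k; case: (boolP (k \in ks)) => hk; last by exists (0%N, i0).
  have [_ hft] := fr k hk.
  have hst : forall j t, (j < 2)%N -> inslot Cl s L v k j t -> s u <= t.
    move=> j t hj ht.
    have hf := slot_in_frame Hdelta HL (ltn_trans hj (ltnSn 2)) ht.
    have [h1 _] := hft t hf.
    by apply: le_trans (hs u) h1.
  have [j [a [hj [t ht] hsub]]] := slot_choice Hdelta Hclock HL hst.
  have haK : (a < K)%N.
    apply: (hK u a t (hsub t ht)).
    exact: (proj2 (hft t (slot_in_frame Hdelta HL (ltn_trans hj (ltnSn 2)) ht))).
  by exists (j, Ordinal haK) => _; split => //; exists t.
case: (choice hdat) => f hf.
pose jf k := (f k).1.
pose oa k := (f k).2.
pose ok k : 'I_K := insubd i0 k.
have vok : forall k, k \in ks -> val (ok k) = k.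
  by move=> k hk; rewrite /ok val_insubd kK.
pose D k := Dset v k (jf k).
pose F k (w : outc) := ((~~ `[< Sev u v (ok k) (oa k) (D k) w >]) : bool)%:R : R.
have hdk : forall k, k \in ks -> [/\ (jf k < 2)%N, exists t, inslot Cl s L v k (jf k) t &
    forall t, inslot Cl s L v k (jf k) t -> inframe Cl s L u (val (oa k)) t].
  by move=> k hk; exact: hf k hk.
have memv : forall k, k \in ks -> (v, ok k) \in D k.
  move=> k hk; have [hj [t ht] _] := hdk k hk.
  rewrite inE; apply/asboolP; exists t; split => //=.
  rewrite vok //; exact: (slot_in_frame Hdelta HL (ltn_trans hj (ltnSn 2)) ht).
have memu : forall k, k \in ks -> (u, oa k) \in D k.
  move=> k hk; have [hj [t ht] hsub] := hdk k hk.
  by rewrite inE; apply/asboolP; exists t; split => //=; apply: hsub.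
have Tfb : forall k, k \in ks -> forall t, inslot Cl s L v k (jf k) t -> t <= Tf.
  move=> k hk t ht; have [hj _ _] := hdk k hk.
  have [_ hft] := fr k hk.
  exact: (proj2 (hft t (slot_in_frame Hdelta HL (ltn_trans hj (ltnSn 2)) ht))).
have stepA : Pr R A Dest (fun w : outc => ~ received A nb Cl s L w u v Tf) <=
             Ex A Dest (fun w => \prod_(k <- ks) F k w).
  rewrite PrE; apply: Ex_le => w.
  case: asboolP => Hn /=; last by apply: prodr_ge0 => k _; exact: ler0n.
  rewrite big_seq big1 // => k hk; rewrite /F.
  case: asboolP => //= HS; exfalso; apply: Hn.
  have [hj hne hsub] := hdk k hk.
  exact: (Sev_received (vok k hk) (ltn_trans hj (ltnSn 2)) hne (Tfb k hk) hsub HS).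
have hdep : forall k, k \in ks -> forall w w' : outc,
    (forall x, x \in D k -> w x = w' x) -> F k w = F k w'.
  move=> k hk w w' hw; rewrite /F.
  have -> : `[< Sev u v (ok k) (oa k) (D k) w >] = `[< Sev u v (ok k) (oa k) (D k) w' >].
    apply/asboolP/asboolP; apply: Sev_dep; rewrite ?memv ?memu //.
    by move=> x hx; rewrite hw.
  by [].
have hdis : forall k1 k2, k1 \in ks -> k2 \in ks -> k1 != k2 ->
    forall x, x \in D k1 -> x \in D k2 -> False.
  move=> k1 k2 h1 h2 h12 [y bb]; rewrite !inE => /asboolP [t1 [s1 f1]] /asboolP [t2 [s2 f2]].
  have [j1 _ _] := hdk k1 h1; have [j2 _ _] := hdk k2 h2.
  case: (ltngtP k1 k2) => e.
  - exact: (slots_disjoint Hdelta Hclock HL (parity_gap (kpar k1 h1) (kpar k2 h2) e) j1 s1 f1 s2 f2).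
  - exact: (slots_disjoint Hdelta Hclock HL (parity_gap (kpar k2 h2) (kpar k1 h1) e) j2 s2 f2 s1 f1).
  - by rewrite e eqxx in h12.
have eB := @Ex_prod R V C A K Dest HA ks D F uks hdep hdis.
have hEF : forall k, k \in ks -> 0 <= Ex A Dest (F k) <= 1 - q.
  move=> k hk; apply/andP; split.
    by apply: Ex_ge0 => w; exact: ler0n.
  have -> : F k = (fun w => 1 - (`[< Sev u v (ok k) (oa k) (D k) w >] : bool)%:R).
    by apply: funext => w; rewrite /F; case: asboolP; rewrite ?subr0 ?subrr.
  rewrite Ex_sub (Ex_cst K Dest HA) -PrE.
  have := Sev_prob (ok k) (oa k) hl (card_frames v k (jf k)).
  rewrite -/q; lra.
apply: le_trans stepA _; rewrite eB big_seq.
have hp := @ler_prod R nat ks (fun k => k \in ks) (fun k => Ex A Dest (F k)) (fun _ => 1 - q) hEF.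
apply: le_trans hp _.
by rewrite -big_seq prod_const_seq.
Qed.

End Net.

Unset Implicit Arguments. Set Strict Implicit.

Theorem mainTheorem6
  (R : realType) (V C : finType) (A : V -> {set C}) (nb : rel V)
  (HA : forall u, A u != set0)
  (Hsym : forall u v, nb u v = nb v u)
  (Hirr : forall u, ~~ nb u u)
  (Dest : nat) (HDest : (0 < Dest)%N)
  (HDelta : forall u c, c \in A u -> (deg A nb u c <= Dest)%N)
  (delta : R) (Hdelta : delta <= 1 / 7)
  (Cl : V -> R -> R)
  (Hclock : forall u (t dt : R), 0 <= dt ->
      (1 - delta) * dt <= Cl u (t + dt) - Cl u t <= (1 + delta) * dt)
  (s : V -> R) (L : R) (HL : 0 < L)
  (eps : R) (Heps0 : 0 < eps) (Heps1 : eps < 1)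
  (Ts : R) (HTs1 : forall u, s u <= Ts) (HTs2 : exists u, s u = Ts)
  (M : R)
  (HM : M = 48 * Num.max (2 * (Smax A)%:R) (3 * Dest%:R) / rho R A nb
            * ln ((#|V|)%:R ^+ 2 / eps))
  (Tf : R)
  (HTf1 : forall u, executed Cl s L Ts M u Tf)
  (HTf2 : forall T, T < Tf -> exists u, ~ executed Cl s L Ts M u T)
  (K : nat)
  (HK : forall u k t, inframe Cl s L u k t -> t <= Tf -> (k < K)%N) :
  1 - eps <= Pr R A Dest (fun w : outcome V C K => all_discovered A nb Cl s L w Tf).
Proof.
have HA' := HA.
set N := #|V|.
set mxv := mx R A Dest.
have hmx : 0 < mxv := mx_pos R A HDest.
have hmx3 : 3 <= mxv.
  have := mx_ge3D R A Dest; have : 1 <= Dest%:R :> R by rewrite ler1n.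
  rewrite /mxv; lra.
have rho_pos : 0 < rho R A nb.
  rewrite /rho; apply: (big_ind (fun x : R => 0 < x)) => //.
    by move=> x y hx hy; rewrite lt_min hx hy.
  case=> v u /= /existsP [c /and3P [_ cu cv]].
  apply: divr_gt0; rewrite ltr0n.
    by apply/card_gt0P; exists c; rewrite inE cu cv.
  by rewrite card_gt0.
have rho_le1 : rho R A nb <= 1 by rewrite /rho; apply: bigmin_le_id.
set q := rho R A nb / (6 * mxv).
have hq0 : 0 < q by rewrite /q; apply: divr_gt0 => //; lra.
have hq1 : q <= 1.
  rewrite /q ler_pdivrMr; last lra.
  lra.
have HM' : M = 48 * mxv / rho R A nb * ln (N%:R ^+ 2 / eps) by rewrite HM.
have linkb : forall u v, link A nb v u ->
    Pr R A Dest (fun w : outcome V C K => ~ received A nb Cl s L w u v Tf)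
    <= eps / N%:R ^+ 2.
  move=> u v hl.
  have [sq [hu hM hff]] := HTf1 v.
  have [n [hn hP]] := link_bound HA Hirr HDelta HDest Hdelta Hclock HL hl hu hff HTs1 HK.
  apply: le_trans hP _.
  have hN : (0 < N)%N by apply/card_gt0P; exists u.
  have hNr : 1 <= N%:R :> R by rewrite ler1n.
  set x := N%:R ^+ 2 / eps.
  have hx1 : 1 <= x.
    rewrite /x ler_pdivlMr // mul1r.
    have : 1 <= N%:R ^+ 2 :> R by rewrite expr2; nra.
    lra.
  have hl0 : 0 <= ln x := ln_ge0 hx1.
  have hMn : M <= 2 * n%:R.
    apply: le_trans hM _; rewrite -(natrM R 2) ler_nat; exact: hn.
  have hqM : q * M = 8 * ln x.
    rewrite HM' /q -/x; field; apply/andP; split; apply/eqP; lra.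
  have hqn : ln x <= n%:R * q.
    have : q * M <= q * (2 * n%:R) by apply: ler_wpM2l; lra.
    rewrite hqM; nra.
  apply: (@le_trans _ _ (expR (- q) ^+ n)).
    apply: lerXn2r; rewrite ?nnegrE -?/q ?expR_ge0 //; first lra.
    by have := expR_ge1Dx (- q); lra.
  rewrite -expRM_natl.
  apply: (@le_trans _ _ (expR (- ln x))).
    by rewrite ler_expR; lra.
  rewrite expRN lnK ?invf_div //.
  rewrite posrE; lra.
rewrite PrE.
have pw : forall w : outcome V C K,
    1 - \sum_(p : V * V | link A nb p.2 p.1)
          (`[< ~ received A nb Cl s L w p.1 p.2 Tf >] : bool)%:R
    <= (`[< all_discovered A nb Cl s L w Tf >] : bool)%:R :> R.
  move=> w; case: asboolP => Hall /=.
    have : 0 <= \sum_(p : V * V | link A nb p.2 p.1)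
          (`[< ~ received A nb Cl s L w p.1 p.2 Tf >] : bool)%:R :> R.
      by apply: sumr_ge0 => p _; exact: ler0n.
    lra.
  have [u [v [hl hr]]] : exists u v, link A nb v u /\ ~ received A nb Cl s L w u v Tf.
    apply: contra_notP Hall => H u v hl.
    by apply: contra_notP H => hr; exists u, v.
  rewrite (bigD1 (u, v)) //=.
  have : 0 <= \sum_(p : V * V | link A nb p.2 p.1 && (p != (u, v)))
          (`[< ~ received A nb Cl s L w p.1 p.2 Tf >] : bool)%:R :> R.
    by apply: sumr_ge0 => p _; exact: ler0n.
  case: asboolP => // _ /=; lra.
apply: le_trans (Ex_le A Dest pw).
rewrite Ex_sub (Ex_cst K Dest HA) Ex_sum.
have hS : \sum_(p : V * V | link A nb p.2 p.1)
    Ex A Dest (fun w : outcome V C K =>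
      (`[< ~ received A nb Cl s L w p.1 p.2 Tf >] : bool)%:R) <= eps.
  apply: (@le_trans _ _ (\sum_(p : V * V) (eps / N%:R ^+ 2))).
    rewrite [X in _ <= X](bigID (fun p : V * V => link A nb p.2 p.1)) /=.
    have : 0 <= \sum_(p : V * V | ~~ link A nb p.2 p.1) (eps / N%:R ^+ 2).
      by apply: sumr_ge0 => p _; apply: divr_ge0; [lra | apply: exprn_ge0; exact: ler0n].
    move=> h0; rewrite -[X in X <= _]addr0; apply: lerD => //.
    by apply: ler_sum => -[u v] /= hl; rewrite -PrE; apply: linkb.
  rewrite (eq_bigl (fun p => p \in [pred p : V * V | true])) // sumr_const.
  have -> : #|[pred p : V * V | true]| = (N * N)%N.
    by rewrite -card_prod; apply: eq_card.
  rewrite -(mulr_natl (eps / N%:R ^+ 2)) natrM.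
  case: (posnP N) => [->|hN]; first by rewrite mul0r mul0r; lra.
  have : N%:R != 0 :> R by rewrite pnatr_eq0 -lt0n.
  move=> hN0; have -> : (N%:R * N%:R * (eps / N%:R ^+ 2) : R) = eps by field.
  by [].
lra.
Qed.
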